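(* For every subgroup $\Gamma\neq\{\widetilde o\}$ of $Z_{\widetilde M}(\widetilde K)$, $$i(P_\Gamma)=\min\Big\{(\psi,\psi)^{-1/2},\ \tfrac12(e_j,e_j)^{1/2}\ :\ \widetilde{\mathrm{Exp}}(\pi\sqrt{-1}e_j)\in\Gamma\Big\}.$$
   Context: Let $(\mathfrak u,\theta,\langle,\rangle)$ be a reduced, compact, irreducible orthogonal involutive Lie algebra ($\mathfrak u=\mathfrak k_0\oplus\mathfrak p_*$ the $\pm1$ eigenspaces of $\theta$), $\widetilde U$ the simply connected group of $\mathfrak u$, $\widetilde K$ the fixed group of the induced involution, $\widetilde M=\widetilde U/\widetilde K$, $\widetilde o=\widetilde e\widetilde K$, $\widetilde{\mathrm{Exp}}(X)=\widetilde\exp(X)\widetilde K$ ($X\in\mathfrak p_*$), and $Z_{\widetilde M}(\widetilde K)$ the group of points of $\widetilde M$ fixed by all left translations by $\widetilde K$. $(\cdot,\cdot)$ is the Killing form of $\mathfrak u\otimes\mathbb C$, positive definite on $\mathfrak h_{\mathfrak p_0}=\sqrt{-1}\mathfrak h_{\mathfrak p_*}$ ($\mathfrak h_{\mathfrak p_*}$ maximal abelian in $\mathfrak p_*$); $\Sigma\subset\mathfrak h_{\mathfrak p_0}$ the restricted root system with simple roots $\gamma_1,\dots,\gamma_l$, highest root $\psi=\sum d_i\gamma_i$; $e_j$ defined by $(e_j,\gamma_i)=\delta_{ij}/d_j$; $\triangle=\{x:(x,\gamma_i)\ge0\ \forall i,\ (x,\psi)\le1\}$. $P_\Gamma=\{x\in\triangle:(x,e_i)\le\frac12(e_i,e_i)$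 for all $i$ with $\widetilde{\mathrm{Exp}}(\pi\sqrt{-1}e_i)\in\Gamma\}$; $P'_\Gamma=\{x\in P_\Gamma:(x,\psi)=1$ or $(x,e_j)=\frac12(e_j,e_j)$ for some $j$ with $\widetilde{\mathrm{Exp}}(\pi\sqrt{-1}e_j)\in\Gamma\}$; $i(P_\Gamma)=\min_{x\in P'_\Gamma}(x,x)^{1/2}$ and $d(P_\Gamma)=\max_{x\in P_\Gamma}(x,x)^{1/2}$. *)

(* Defs.v *)
From mathcomp Require Import all_boot all_order all_algebra.
Set Implicit Arguments. Unset Strict Implicit. Unset Printing Implicit Defensive.
Import Order.TTheory GRing.Theory Num.Theory.
Local Open Scope ring_scope.

(* The Euclidean space (h_p0, Killing form) is modelled as 'rV[R]_l with the
   standard inner product (any finite-dim. inner product space is isometric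
   to this). *)
Definition dot (R : rcfType) (l : nat) (u v : 'rV[R]_l) : R :=
  \sum_(k < l) u 0 k * v 0 k.

Definition refl (R : rcfType) (l : nat) (a x : 'rV[R]_l) : 'rV[R]_l :=
  x - ((2 * dot x a) / dot a a) *: a.

(* Crystallographic (possibly non-reduced) root system spanning 'rV_l. *)
Definition is_root_system (R : rcfType) (l : nat) (S : seq 'rV[R]_l) : Prop :=
  [/\ 0 \notin S,
      (forall x : 'rV[R]_l, exists c : nat -> R,
          x = \sum_(k < size S) c k *: S`_k),
      (forall a b, a \in S -> b \in S -> refl a b \in S) &
      (forall a b, a \in S -> b \in S ->
          exists z : int, 2 * dot a b / dot b b = z%:~R)].

Definition irreducible_rs (R : rcfType) (l : nat) (S : seq 'rV[R]_l) : Prop :=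
  forall P : pred 'rV[R]_l,
    (forall a b, a \in S -> b \in S -> P a -> ~~ P b -> dot a b = 0) ->
    all P S \/ all (predC P) S.

Definition is_base (R : rcfType) (l : nat) (S : seq 'rV[R]_l)
  (gamma : 'I_l -> 'rV[R]_l) : Prop :=
  [/\ (forall i, gamma i \in S),
      (forall c : 'I_l -> R, \sum_i c i *: gamma i = 0 -> forall i, c i = 0) &
      (forall b, b \in S -> exists k : 'I_l -> nat,
          b = \sum_i (k i)%:R *: gamma i \/ b = - \sum_i (k i)%:R *: gamma i)].

Definition is_highest_root (R : rcfType) (l : nat) (S : seq 'rV[R]_l)
  (gamma : 'I_l -> 'rV[R]_l) (psi : 'rV[R]_l) : Prop :=
  psi \in S /\
  forall b, b \in S -> exists k : 'I_l -> nat, psi - b = \sum_i (k i)%:R *: gamma i.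

Definition alcove (R : rcfType) (l : nat) (gamma : 'I_l -> 'rV[R]_l)
  (psi x : 'rV[R]_l) : Prop :=
  (forall i, 0 <= dot x (gamma i)) /\ dot x psi <= 1.

(* P_Gamma, where J j <-> Exp(pi sqrt(-1) e_j) \in Gamma *)
Definition PG (R : rcfType) (l : nat) (gamma e : 'I_l -> 'rV[R]_l)
  (psi : 'rV[R]_l) (J : pred 'I_l) (x : 'rV[R]_l) : Prop :=
  alcove gamma psi x /\
  forall i, J i -> dot x (e i) <= dot (e i) (e i) / 2.

Definition PG' (R : rcfType) (l : nat) (gamma e : 'I_l -> 'rV[R]_l)
  (psi : 'rV[R]_l) (J : pred 'I_l) (x : 'rV[R]_l) : Prop :=
  PG gamma e psi J x /\
  (dot x psi = 1 \/ exists j, J j /\ dot x (e j) = dot (e j) (e j) / 2).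

Definition is_min_norm (R : rcfType) (l : nat) (A : 'rV[R]_l -> Prop) (m : R)
  : Prop :=
  (exists x, A x /\ Num.sqrt (dot x x) = m) /\
  (forall x, A x -> m <= Num.sqrt (dot x x)).

(* Main.v *)
Require Import Defs.
From mathcomp Require Import all_boot all_order all_algebra.
From mathcomp Require Import ring lra.
Import Order.TTheory GRing.Theory Num.Theory.
Local Open Scope ring_scope.

Section Dot.
Variables (R : rcfType) (l : nat).
Implicit Types (u v w : 'rV[R]_l).

Lemma dotC u v : dot u v = dot v u.
Proof. by apply: eq_bigr => k _; rewrite mulrC. Qed.

Lemma dotZl a u v : dot (a *: u) v = a * dot u v.
Proof. by rewrite /dot mulr_sumr; apply: eq_bigr => k _; rewrite mxE mulrA. Qed.

Lemma dotZr a u v : dot u (a *: v) = a * dot u v.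
Proof. by rewrite dotC dotZl dotC. Qed.

Lemma dotDl u w v : dot (u + w) v = dot u v + dot w v.
Proof. by rewrite /dot -big_split; apply: eq_bigr => k _; rewrite mxE mulrDl. Qed.

Lemma dotDr u w v : dot v (u + w) = dot v u + dot v w.
Proof. by rewrite dotC dotDl !(dotC v). Qed.

Lemma dot0l v : dot 0 v = 0.
Proof. by rewrite /dot big1 // => k _; rewrite mxE mul0r. Qed.

Lemma dot_sumr (I : finType) u (c : I -> R) (g : I -> 'rV[R]_l) :
  dot u (\sum_i c i *: g i) = \sum_i c i * dot u (g i).
Proof.
rewrite dotC (big_morph (fun w => dot w u) (fun a b => dotDl a b u) (dot0l u)).
by apply: eq_bigr => i _; rewrite dotZl dotC.
Qed.

Lemma dot_ge0 u : 0 <= dot u u.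
Proof. by apply: sumr_ge0 => k _; rewrite -expr2 sqr_ge0. Qed.

Lemma dot_eq0 u : dot u u = 0 -> u = 0.
Proof.
move=> H; apply/rowP => k.
have /psumr_eq0P h : \sum_(i < l | true) u 0 i * u 0 i = 0 by [].
have := h (fun i _ => ltac:(rewrite -expr2 sqr_ge0 //)) k isT.
by move/eqP; rewrite mulf_eq0 orbb mxE => /eqP.
Qed.

Lemma sqdot u : Num.sqrt (dot u u) ^+ 2 = dot u u.
Proof. by rewrite sqr_sqrtr // dot_ge0. Qed.

Lemma CS u v : dot u v <= Num.sqrt (dot u u) * Num.sqrt (dot v v).
Proof.
set s := Num.sqrt (dot u u); set t := Num.sqrt (dot v v).
have hs : 0 <= s by apply: sqrtr_ge0.
have ht : 0 <= t by apply: sqrtr_ge0.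
have hs2 : dot u u = s ^+ 2 by rewrite sqdot.
have ht2 : dot v v = t ^+ 2 by rewrite sqdot.
have H := dot_ge0 (t *: u - s *: v).
have E : dot (t *: u - s *: v) (t *: u - s *: v) =
   t^+2 * dot u u - 2 * (t * s) * dot u v + s^+2 * dot v v.
  rewrite dotDl !dotDr -!scaleNr !dotZl !dotZr.
  rewrite (dotC v u); ring.
rewrite E hs2 ht2 in H.
have [st0|st0] := eqVneq (s * t) 0.
  move: st0 => /eqP; rewrite mulf_eq0 => /orP[/eqP s0|/eqP t0].
    have u0 : u = 0 by apply: dot_eq0; rewrite hs2 s0 expr0n.
    by rewrite u0 dot0l s0 mul0r.
  have v0 : v = 0 by apply: dot_eq0; rewrite ht2 t0 expr0n.
  by rewrite v0 dotC dot0l t0 mulr0.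
have st : 0 < s * t by rewrite lt_def st0 mulr_ge0.
have E2 : t ^+ 2 * s ^+ 2 - 2 * (t * s) * dot u v + s ^+ 2 * t ^+ 2 =
  (2 * (s * t)) * (s * t - dot u v) by ring.
rewrite E2 pmulr_rge0 ?subr_ge0 // in H.
by rewrite mulr_gt0.
Qed.

End Dot.
Arguments CS {R l} u v.
Lemma bigmin_cases (R : rcfType) (I : finType) (P : pred I) (F : I -> R) (x : R) :
  let m := \big[Num.min/x]_(i | P i) F i in
  (m = x /\ forall i, P i -> x <= F i) \/
  exists j, [/\ P j, m = F j, F j <= x & forall i, P i -> F j <= F i].
Proof.
move=> m.
have H : m = x \/ exists j, P j /\ m = F j.
  rewrite /m; elim/big_rec: _ => [|i y Pi IH]; first by left.
  case: (leP (F i) y) => _.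
    by right; exists i.
  by [].
have le1 : m <= x by apply: bigmin_le_id.
have le2 i : P i -> m <= F i by move=> Pi; apply: bigmin_le_cond.
case: H => [E|[j [Pj E]]].
  by left; split=> // i Pi; rewrite -E le2.
by right; exists j; split=> //; rewrite -E // => i Pi; apply: le2.
Qed.
Theorem mainTheorem11 (R : rcfType) (l : nat) (S : seq 'rV[R]_l)
  (gamma : 'I_l -> 'rV[R]_l) (psi : 'rV[R]_l) (d : 'I_l -> nat)
  (e : 'I_l -> 'rV[R]_l) (J : pred 'I_l) :
  is_root_system S -> irreducible_rs S -> is_base S gamma ->
  is_highest_root S gamma psi ->
  psi = \sum_i (d i)%:R *: gamma i ->
  (forall i j, dot (e j) (gamma i) = (i == j)%:R / (d j)%:R) ->
  is_min_norm (PG' gamma e psi J)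
    (\big[Num.min/(Num.sqrt (dot psi psi))^-1]_(j | J j)
        (Num.sqrt (dot (e j) (e j)) / 2)).
Proof.
move=> [S0 _ Srefl _] _ [gS gind _] [psiS hr] psiE eE.
have pos_of v : v \in S -> 0 < dot v v.
  move=> vS; rewrite lt_def dot_ge0 andbT; apply/eqP => /dot_eq0 v0.
  by move: S0; rewrite -v0 vS.
have Ppos := pos_of _ psiS.
have dom i : 0 <= dot psi (gamma i).
  have Gpos := pos_of _ (gS i).
  set c := 2 * dot psi (gamma i) / dot (gamma i) (gamma i).
  have [k hk] := hr _ (Srefl _ _ (gS i) psiS).
  move: hk; rewrite /refl -/c opprB addrC subrK => hk.
  have H0 : \sum_t ((k t)%:R - (t == i)%:R * c) *: gamma t = 0.
    under eq_bigr => t _ do rewrite scalerBl.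
    rewrite big_split /= sumrN -hk (bigD1 i) //= big1 => [|t /negbTE ->];
      last by rewrite mul0r scale0r.
    by rewrite eqxx mul1r addr0 subrr.
  have := gind _ H0 i; rewrite eqxx mul1r => /eqP; rewrite subr_eq0 => /eqP ck.
  have c0 : 0 <= c by rewrite -ck ler0n.
  have -> : dot psi (gamma i) = c * dot (gamma i) (gamma i) / 2.
    rewrite /c divfK ?gt_eqF // mulrC mulrA mulVf ?mul1r ?pnatr_eq0 //.
  by rewrite divr_ge0 // mulr_ge0 // ltW.
set q := Num.sqrt (dot psi psi).
have qpos : 0 < q by rewrite sqrtr_gt0.
have q2 : dot psi psi = q ^+ 2 by rewrite sqdot.
split; last first.
  move=> x [_ [H|[j [Jj H]]]].
    apply: (le_trans (bigmin_le_id _ _ _ _)).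
    have := CS x psi; rewrite H -/q => h.
    by rewrite -(mul1r q^-1) ler_pdivrMr.
  apply: (le_trans (bigmin_le_cond _ _ Jj)).
  have := CS x (e j); rewrite H.
  set t := Num.sqrt (dot (e j) (e j)); set s := Num.sqrt (dot x x).
  have -> : dot (e j) (e j) = t ^+ 2 by rewrite sqdot.
  have t0 : 0 <= t by apply: sqrtr_ge0.
  have s0 : 0 <= s by apply: sqrtr_ge0.
  move=> h; nra.
case: (@bigmin_cases R _ J (fun j => Num.sqrt (dot (e j) (e j)) / 2) q^-1)
  => [[-> Hle]|[j [Jj -> Hj Hle]]].
  exists ((dot psi psi)^-1 *: psi); split.
    split; last by left; rewrite dotZl mulVf ?gt_eqF.
    split.
      split=> [i|]; last by rewrite dotZl mulVf ?gt_eqF.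
      by rewrite dotZl mulr_ge0 // invr_ge0 ltW.
    move=> i Ji; rewrite dotZl.
    have := Hle i Ji; have := CS psi (e i).
    set t := Num.sqrt (dot (e i) (e i)); rewrite -/q.
    have -> : dot (e i) (e i) = t ^+ 2 by rewrite sqdot.
    have t0 : 0 <= t by apply: sqrtr_ge0.
    rewrite q2 => h1 h2.
    set a := dot psi (e i).
    set r := q^-1 in h2 *.
    have rq : r * q = 1 by rewrite mulVf ?gt_eqF.
    have r0 : 0 < r by rewrite invr_gt0.
    have -> : (q ^+ 2)^-1 = r * r by rewrite expr2 invfM.
    have s1 : r * r * a <= r * t.
      apply: (le_trans (ler_wpM2l _ h1)); first by rewrite mulr_ge0 // ltW.
      by rewrite -mulrA (mulrA r q t) rq mul1r.
    apply: (le_trans s1).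
    have := ler_wpM2r t0 h2.
    by rewrite expr2 mulrAC.
  rewrite dotZl dotZr mulrA -invfM -expr2 q2 -exprVn.
  have qn0 : q != 0 by rewrite gt_eqF.
  have -> : q ^- 2 ^+ 2 * q ^+ 2 = (q^-1)^+2 by field.
  by rewrite sqrtr_sqr ger0_norm // invr_ge0 ltW.
exists (2^-1 *: e j); split.
  split; last by right; exists j; split=> //; rewrite dotZl mulrC.
  split.
    split=> [i|].
      by rewrite dotZl eE mulr_ge0 ?invr_ge0 ?divr_ge0 ?ler0n.
    rewrite dotZl psiE dot_sumr (bigD1 j) //= big1 => [|i /negbTE ij];
      last by rewrite eE ij mul0r mulr0.
    rewrite eE eqxx mul1r addr0.
    have [->|dj] := eqVneq (d j) 0%N; first by rewrite mul0r mulr0.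
    rewrite mulfV ?pnatr_eq0 // mulr1; lra.
  move=> i Ji; rewrite dotZl.
  have := Hle i Ji; have := CS (e j) (e i).
  set t := Num.sqrt (dot (e i) (e i)); set u := Num.sqrt (dot (e j) (e j)).
  have -> : dot (e i) (e i) = t ^+ 2 by rewrite sqdot.
  have t0 : 0 <= t by apply: sqrtr_ge0.
  have u0 : 0 <= u by apply: sqrtr_ge0.
  move=> h1 h2; nra.
rewrite dotZl dotZr mulrA sqrtrM; last by rewrite mulr_ge0 // invr_ge0 ler0n.
by rewrite -expr2 sqrtr_sqr ger0_norm ?invr_ge0 ?ler0n // mulrC.
Qed.
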